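(* Let $n\ge1$, let $B=\{\cos(\theta)|0\rangle+\sin(\theta)|1\rangle\mid0\le\theta<2\pi\}$ and $\mathcal S=B^{\otimes n}=\{|b_1\rangle\otimes\cdots\otimes|b_n\rangle\mid|b_j\rangle\in B\}$. (i) There exists a randomization procedure for $\mathcal S$ whose probability distribution has Shannon entropy $H(p_1,\dots,p_N)=n$. (ii) Every randomization procedure for $\mathcal S$ (using any number of ancilla qubits) has $H(p_1,\dots,p_N)\ge n$.
   Context: $\mathcal{H}_{2^k}$ denotes the Hilbert space of $k$ qubits; $H(p_1,\dots,p_N)=-\sum_ip_i\log_2p_i$. A randomization procedure for a set $\mathcal S\subseteq\mathcal H_{2^n}$ of pure $n$-qubit states consists of an integer $m\ge n$, probabilities $p_1,\dots,p_N\ge0$ with $\sum_ip_i=1$, unitaries $U_1,\dots,U_N$ on $\mathcal H_{2^m}$, an $(m-n)$-qubit density matrix $\rho_a$ (ancilla) and an $m$-qubit density matrix $\rho_0$ such that $\sum_{i=1}^Np_iU_i(|\phi\rangle\langle\phi|\otimes\rho_a)U_i^\dagger=\rho_0$ for every $|\phi\rangle\in\mathcal S$ (the entropy generated is $H(p_1,\dots,p_N)$). *)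

(* Defs.v *)
From HB Require Import structures.
From mathcomp Require Import all_boot all_order all_algebra.
From mathcomp Require Import spectral.
From mathcomp Require Import complex mxtens.
From mathcomp Require Import reals exp trigo.
Set Implicit Arguments. Unset Strict Implicit. Unset Printing Implicit Defensive.
Import Order.TTheory GRing.Theory Num.Theory.
Local Open Scope ring_scope.
Local Open Scope complex_scope.

Section QRand.
Variable R : realType.
Local Notation C := R[i].

Definition adjmx m n (A : 'M[C]_(m, n)) : 'M[C]_(n, m) := (map_mx Num.conj A)^T.

Definition qtens n k (A : 'M[C]_(2 ^ n)) (B : 'M[C]_(2 ^ k)) : 'M[C]_(2 ^ (n + k)) :=
  castmx (esym (expnD 2 n k), esym (expnD 2 n k)) (A *t B).

Definition qubit (t : R) : 'cV[C]_2 :=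
  \col_(i < 2) (if (i : nat) == 0%N then (cos t)%:C else (sin t)%:C).

Fixpoint prod_state (n : nat) : (nat -> R) -> 'cV[C]_(2 ^ n) :=
  match n return (nat -> R) -> 'cV[C]_(2 ^ n) with
  | 0%N => fun _ => const_mx 1
  | n'.+1 => fun th =>
      castmx (esym (expnS 2 n'), muln1 1%N)
        (qubit (th 0%N) *t prod_state n' (fun j => th j.+1))
  end.

Definition SB (n : nat) (phi : 'cV[C]_(2 ^ n)) : Prop :=
  exists th : nat -> R,
    (forall j, (j < n)%N -> 0 <= th j < 2 * pi) /\ phi = prod_state n th.

Definition density m (A : 'M[C]_m) : Prop :=
  adjmx A = A /\ (forall x : 'cV[C]_m, 0 <= (adjmx x *m A *m x) 0 0) /\ \tr A = 1.

(* A randomization procedure for a set S of pure n-qubit states, with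
   m = n + k qubits in total (k >= 0 ancilla qubits). *)
Definition randomization (n : nat) (S : 'cV[C]_(2 ^ n) -> Prop) (k N : nat)
  (p : 'I_N -> R) (U : 'I_N -> 'M[C]_(2 ^ (n + k)))
  (rho_a : 'M[C]_(2 ^ k)) (rho0 : 'M[C]_(2 ^ (n + k))) : Prop :=
  (forall i, 0 <= p i) /\ \sum_i p i = 1 /\
  (forall i, U i \is unitarymx) /\ density rho_a /\ density rho0 /\
      (forall phi, S phi ->
        \sum_i (p i)%:C *: (U i *m qtens (phi *m adjmx phi) rho_a *m adjmx (U i))
        = rho0).

Definition entropy N (p : 'I_N -> R) : R :=
  - \sum_i (if p i == 0 then 0 else p i * (ln (p i) / ln 2)).

End QRand.

(* Main.v *)
Require Import Defs.
From HB Require Import structures.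
From mathcomp Require Import all_boot all_order all_algebra.
From mathcomp Require Import spectral.
From mathcomp Require Import complex mxtens.
From mathcomp Require Import reals exp trigo.
From mathcomp Require Import ring lra.
Set Implicit Arguments. Unset Strict Implicit. Unset Printing Implicit Defensive.
Import Order.TTheory GRing.Theory Num.Theory.
Local Open Scope ring_scope.

Section Aux.
Variable R : realType.
Local Notation C := R[i].
Local Open Scope complex_scope.

Lemma castmx_mulmx m m' n n' p p' (e1 : m = m') (e2 e2' : n = n') (e3 : p = p')
  (A : 'M[C]_(m, n)) (B : 'M[C]_(n, p)) :
  castmx (e1, e2) A *m castmx (e2', e3) B = castmx (e1, e3) (A *m B).
Proof.
rewrite (eq_irrelevance e2' e2); clear e2'.
by case: m' / e1; case: n' / e2; case: p' / e3; rewrite !castmx_id.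
Qed.

Lemma adjmx_cast m m' n n' (e1 : m = m') (e2 : n = n') (A : 'M[C]_(m, n)) :
  adjmx (castmx (e1, e2) A) = castmx (e2, e1) (adjmx A).
Proof. by case: m' / e1; case: n' / e2; rewrite !castmx_id. Qed.

Lemma adjmx_mul m n p (A : 'M[C]_(m, n)) (B : 'M[C]_(n, p)) :
  adjmx (A *m B) = adjmx B *m adjmx A.
Proof. by rewrite /adjmx map_mxM trmx_mul. Qed.

Lemma adjmx_tens m n p q (A : 'M[C]_(m, n)) (B : 'M[C]_(p, q)) :
  adjmx (A *t B) = adjmx A *t adjmx B.
Proof. by rewrite /adjmx map_mxT trmx_tens. Qed.

Lemma adjmxK m n (A : 'M[C]_(m, n)) : adjmx (adjmx A) = A.
Proof. by apply/matrixP => i j; rewrite !mxE conjCK. Qed.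

Lemma adjmx1 m : adjmx (1%:M : 'M[C]_m) = 1%:M.
Proof. by apply/matrixP => i j; rewrite !mxE eq_sym; case: eqP => _; rewrite ?conjC1 ?conjC0. Qed.

Lemma adjmx_sum m n I (r : seq I) (P : pred I) (F : I -> 'M[C]_(m, n)) :
  adjmx (\sum_(i <- r | P i) F i) = \sum_(i <- r | P i) adjmx (F i).
Proof. by apply/matrixP => i j; rewrite !mxE !summxE rmorph_sum; apply: eq_bigr => k _; rewrite !mxE. Qed.

Lemma adjmxZ m n (c : C) (A : 'M[C]_(m, n)) : adjmx (c *: A) = c^* *: adjmx A.
Proof. by apply/matrixP => i j; rewrite !mxE rmorphM. Qed.

Lemma castmx_sum m m' n n' (e1 : m = m') (e2 : n = n') I (r : seq I) (P : pred I) (F : I -> 'M[C]_(m, n)) :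
  castmx (e1, e2) (\sum_(i <- r | P i) F i) = \sum_(i <- r | P i) castmx (e1, e2) (F i).
Proof. by case: m' / e1; case: n' / e2; rewrite castmx_id; apply: eq_bigr => i _; rewrite castmx_id. Qed.

Lemma castmxZ m m' n n' (e1 : m = m') (e2 : n = n') (c : C) (A : 'M[C]_(m, n)) :
  castmx (e1, e2) (c *: A) = c *: castmx (e1, e2) A.
Proof. by case: m' / e1; case: n' / e2; rewrite !castmx_id. Qed.

Lemma castmx1 m m' (e1 e2 : m = m') : castmx (e1, e2) (1%:M : 'M[C]_m) = 1%:M.
Proof. by rewrite (eq_irrelevance e2 e1); clear e2; case: m' / e1; rewrite castmx_id. Qed.

Lemma tensmx_suml m n p q I (r : seq I) (P : pred I) (F : I -> 'M[C]_(m, n)) (B : 'M[C]_(p, q)) :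
  (\sum_(i <- r | P i) F i) *t B = \sum_(i <- r | P i) (F i *t B).
Proof. apply/matrixP => i j; rewrite !mxE !summxE mulr_suml; apply: eq_bigr => k _; by rewrite !mxE. Qed.

Lemma tensmx_sumr m n p q I (r : seq I) (P : pred I) (A : 'M[C]_(m, n)) (F : I -> 'M[C]_(p, q)) :
  A *t (\sum_(i <- r | P i) F i) = \sum_(i <- r | P i) (A *t F i).
Proof. apply/matrixP => i j; rewrite !mxE !summxE mulr_sumr; apply: eq_bigr => k _; by rewrite !mxE. Qed.

Lemma tensmxZl m n p q (c : C) (A : 'M[C]_(m, n)) (B : 'M[C]_(p, q)) :
  (c *: A) *t B = c *: (A *t B).
Proof. by apply/matrixP => i j; rewrite !mxE mulrA. Qed.

Lemma tensmxZr m n p q (c : C) (A : 'M[C]_(m, n)) (B : 'M[C]_(p, q)) :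
  A *t (c *: B) = c *: (A *t B).
Proof. by apply/matrixP => i j; rewrite !mxE mulrCA. Qed.

Lemma tensmx11 m n : (1%:M : 'M[C]_m) *t (1%:M : 'M[C]_n) = 1%:M.
Proof.
apply/matrixP => i j; rewrite !mxE.
case: (mxtens_indexP i) => i1 i2; case: (mxtens_indexP j) => j1 j2.
rewrite !mxtens_indexK /= -natrM mulnb.
congr (_%:R); congr nat_of_bool.
apply/idP/eqP => [/andP[/eqP-> /eqP->]//|/(can_inj (@mxtens_indexK _ _))[-> ->]].
by rewrite !eqxx.
Qed.


Definition qf n (A : 'M[C]_n) (x : 'cV[C]_n) : C := (adjmx x *m A *m x) 0 0.

Lemma qf_sum n I (r : seq I) (P : pred I) (c : I -> C) (F : I -> 'M[C]_n) x :
  qf (\sum_(i <- r | P i) c i *: F i) x = \sum_(i <- r | P i) c i * qf (F i) x.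
Proof.
rewrite /qf mulmx_sumr mulmx_suml summxE; apply: eq_bigr => i _.
by rewrite -scalemxAr -scalemxAl mxE.
Qed.

Lemma qf_outer n (w x : 'cV[C]_n) :
  qf (w *m adjmx w) x = ((adjmx w *m x) 0 0)^* * (adjmx w *m x) 0 0.
Proof.
rewrite /qf mulmxA.
have -> : adjmx x *m w = adjmx (adjmx w *m x) by rewrite adjmx_mul adjmxK.
rewrite -mulmxA [in LHS]mxE big_ord1 /adjmx !mxE //.
Qed.

Lemma qf_outer_ge0 n (w x : 'cV[C]_n) : 0 <= qf (w *m adjmx w) x.
Proof. by rewrite qf_outer mulrC mul_conjC_ge0. Qed.

Lemma qf_conj n (U A : 'M[C]_n) x : qf (U *m A *m adjmx U) x = qf A (adjmx U *m x).
Proof. by rewrite /qf adjmx_mul adjmxK !mulmxA. Qed.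

Lemma unitary_adj n (U : 'M[C]_n) : U \is unitarymx -> adjmx U *m U = 1%:M.
Proof.
move=> Uu.
have -> : adjmx U = invmx U by rewrite invmx_unitary // /adjmx map_trmx.
by rewrite mulVmx // unitarymx_unit.
Qed.

Lemma unitary_adj' n (U : 'M[C]_n) : U \is unitarymx -> U *m adjmx U = 1%:M.
Proof. by move=> /unitarymxP; rewrite /adjmx map_trmx. Qed.

Lemma psd_decomp e (A : 'M[C]_e) : adjmx A = A -> (forall x, 0 <= qf A x) ->
  exists (d : 'I_e -> R) (v : 'I_e -> 'cV[C]_e),
   [/\ forall l, 0 <= d l, A = \sum_l (d l)%:C *: (v l *m adjmx (v l)),
       \sum_l (v l *m adjmx (v l)) = 1%:M &
       forall l l', adjmx (v l) *m v l' = (l == l')%:R%:M].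
Proof.
move=> Ah Apsd.
have Anorm : A \is normalmx by apply/normalmxP; rewrite -map_trmx -/(adjmx A) Ah.
have := orthomx_spectralP Anorm.
set P := spectralmx A; set sp := spectral_diag A => AE.
have Pu : P \is unitarymx by apply: spectral_unitarymx.
have PiE : invmx P = adjmx P by rewrite invmx_unitary // /adjmx map_trmx.
pose v l : 'cV[C]_e := adjmx P *m delta_mx l 0.
have adjv l : adjmx (v l) = delta_mx 0 l *m P.
  rewrite /v adjmx_mul adjmxK; congr (_ *m _).
  by apply/matrixP => i j; rewrite !mxE conjC_nat andbC.
have orth l l' : adjmx (v l) *m v l' = (l == l')%:R%:M.
  rewrite adjv /v mulmxA -[delta_mx 0 l *m P *m _]mulmxA unitary_adj' // mulmx1.
  rewrite mul_delta_mx_cond; apply/matrixP => i j; rewrite !ord1 !mxE !eqxx /=.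
  by case: (l == l'); rewrite ?mulr0n ?mulr1n ?mxE.
have AE' : A = \sum_l sp 0 l *: (v l *m adjmx (v l)).
  rewrite {1}AE PiE diag_mx_sum_delta mulmx_sumr mulmx_suml; apply: eq_bigr => l _.
  by rewrite -scalemxAr -scalemxAl adjv /v -(mul_delta_mx (0 : 'I_1)) !mulmxA.
have spE l : sp 0 l = qf A (v l).
  rewrite AE' qf_sum (bigD1 l) //= big1 ?addr0.
    by rewrite qf_outer orth eqxx mxE eqxx mulr1n conjC1 !mulr1.
  move=> l' /negbTE nl; rewrite qf_outer orth nl.
  by rewrite !mxE /= !mulr0n conjC0 !mul0r mulr0.
have sp_ge0 l : 0 <= sp 0 l by rewrite spE.
exists (fun l => complex.Re (sp 0 l)), v; split => //.
- by move=> l; rewrite -lecR RRe_real ?ger0_real.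
- by rewrite {1}AE'; apply: eq_bigr => l _; rewrite RRe_real ?ger0_real.
- rewrite -(unitary_adj Pu) -[X in _ = X *m _]mulmx1 mx1_sum_delta mulmx_sumr mulmx_suml.
  apply: eq_bigr => l _; rewrite adjv /v -!mulmxA; congr (_ *m _); by rewrite mulmxA mul_delta_mx.
Qed.


Definition castc n k (x : 'M[C]_(2 ^ n * 2 ^ k, 1 * 1)) : 'cV[C]_(2 ^ (n + k)) :=
  castmx (esym (expnD 2 n k), muln1 1) x.

Lemma qtens_outer n k (a : 'cV[C]_(2 ^ n)) (b : 'cV[C]_(2 ^ k)) :
  qtens (a *m adjmx a) (b *m adjmx b) = castc (a *t b) *m adjmx (castc (a *t b)).
Proof.
by rewrite /castc adjmx_cast castmx_mulmx adjmx_tens tensmx_mul.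
Qed.

Lemma qtens_suml n k I (r : seq I) (P : pred I) (F : I -> 'M[C]_(2 ^ n)) (B : 'M[C]_(2 ^ k)) :
  qtens (\sum_(i <- r | P i) F i) B = \sum_(i <- r | P i) qtens (F i) B.
Proof. by rewrite /qtens tensmx_suml castmx_sum. Qed.

Lemma qtens_sumr n k I (r : seq I) (P : pred I) (A : 'M[C]_(2 ^ n)) (F : I -> 'M[C]_(2 ^ k)) :
  qtens A (\sum_(i <- r | P i) F i) = \sum_(i <- r | P i) qtens A (F i).
Proof. by rewrite /qtens tensmx_sumr castmx_sum. Qed.

Lemma qtensZr n k (c : C) (A : 'M[C]_(2 ^ n)) (B : 'M[C]_(2 ^ k)) :
  qtens A (c *: B) = c *: qtens A B.
Proof. by rewrite /qtens tensmxZr castmxZ. Qed.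

Lemma qtens11 n k : qtens (1%:M : 'M[C]_(2 ^ n)) (1%:M : 'M[C]_(2 ^ k)) = 1%:M.
Proof. by rewrite /qtens tensmx11 castmx1. Qed.

Lemma qtens_rank1 n k (u : 'cV[C]_(2 ^ n)) I (r : seq I) (P : pred I)
   (be : I -> C) (v : I -> 'cV[C]_(2 ^ k)) :
  qtens (u *m adjmx u) (\sum_(l <- r | P l) be l *: (v l *m adjmx (v l))) =
  \sum_(l <- r | P l) be l *: (castc (u *t v l) *m adjmx (castc (u *t v l))).
Proof. by rewrite qtens_sumr; apply: eq_bigr => l _; rewrite qtensZr qtens_outer. Qed.

Lemma qf_tens_pure n k (a : 'cV[C]_(2 ^ n)) (b : 'cV[C]_(2 ^ k)) A B :
  qf (qtens A B) (castc (a *t b)) = qf A a * qf B b.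
Proof.
rewrite /qf /castc /qtens adjmx_cast !castmx_mulmx adjmx_tens !tensmx_mul.
rewrite castmxE /=.
have -> : cast_ord (esym (muln1 1)) 0 = mxtens_index ((0 : 'I_1), (0 : 'I_1)).
  by apply: val_inj.
by rewrite tensmxE.
Qed.

Lemma qf1_unitary n (U : 'M[C]_n) x : U \is unitarymx -> qf 1%:M (adjmx U *m x) = qf 1%:M x.
Proof. by move=> Uu; rewrite -qf_conj mulmx1 unitary_adj'. Qed.


Lemma cast_outer m p m' (e : (m * p)%N = m') (a : 'cV[C]_m) (b : 'cV[C]_p) :
  castmx (e, muln1 1) (a *t b) *m adjmx (castmx (e, muln1 1) (a *t b)) =
  castmx (e, e) ((a *m adjmx a) *t (b *m adjmx b)).
Proof. by rewrite adjmx_cast castmx_mulmx adjmx_tens tensmx_mul. Qed.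

Lemma qf_cast_tens m p m' (e : (m * p)%N = m') (a : 'cV[C]_m) (b : 'cV[C]_p) A B :
  qf (castmx (e, e) (A *t B)) (castmx (e, muln1 1) (a *t b)) = qf A a * qf B b.
Proof.
rewrite /qf adjmx_cast !castmx_mulmx adjmx_tens !tensmx_mul.
rewrite castmxE /=.
have -> : cast_ord (esym (muln1 1)) 0 = mxtens_index ((0 : 'I_1), (0 : 'I_1)).
  by apply: val_inj.
by rewrite tensmxE.
Qed.

Lemma qf1_cast_tens m p m' (e : (m * p)%N = m') (a : 'cV[C]_m) (b : 'cV[C]_p) :
  qf 1%:M (castmx (e, muln1 1) (a *t b)) = qf 1%:M a * qf 1%:M b.
Proof. by rewrite -(qf_cast_tens e) tensmx11 castmx1. Qed.

Lemma conjR (x : R) : Num.conj (x%:C) = x%:C.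
Proof. by apply: conj_Creal; apply/complex_realP; exists x. Qed.

Lemma qubit_norm t : qf 1%:M (qubit t) = 1.
Proof.
rewrite /qf mulmx1 mxE !big_ord_recr big_ord0 /= !mxE /=.
by rewrite add0r !conjR -!rmorphM -rmorphD -!expr2 cos2Dsin2.
Qed.

Lemma prod_state_norm n th : qf 1%:M (prod_state n th) = 1.
Proof.
elim: n th => [|n IH] th /=.
  by rewrite /qf mulmx1 mxE big_ord1 !mxE conjC1 mulr1.
by rewrite qf1_cast_tens qubit_norm IH mulr1.
Qed.

Definition splitb n (b : 'I_(2 ^ n.+1)) : 'I_2 * 'I_(2 ^ n) :=
  mxtens_unindex (cast_ord (expnS 2 n) b).
Definition joinb n (p : 'I_2 * 'I_(2 ^ n)) : 'I_(2 ^ n.+1) :=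
  cast_ord (esym (expnS 2 n)) (mxtens_index p).

Arguments splitb n b : simpl never.
Arguments joinb n p : simpl never.

Lemma joinbK n : cancel (@joinb n) (@splitb n).
Proof. by move=> p; rewrite /splitb /joinb cast_ordKV mxtens_indexK. Qed.
Lemma splitbK n : cancel (@splitb n) (@joinb n).
Proof. by move=> b; rewrite /splitb /joinb mxtens_unindexK cast_ordK. Qed.

Lemma sum_splitb n (V : nmodType) (F : 'I_(2 ^ n.+1) -> V) :
  \sum_b F b = \sum_(b1 < 2) \sum_(b2 < 2 ^ n) F (joinb (b1, b2)).
Proof.
rewrite pair_bigA /=.
have hb : {on [pred i | xpredT i], bijective (@joinb n)}.
  by exists (@splitb n) => x _; rewrite ?joinbK ?splitbK.
rewrite (reindex _ hb); apply: eq_bigr => -[b1 b2] _ //.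
Qed.

Fixpoint bas n : 'I_(2 ^ n) -> nat -> R :=
  match n return 'I_(2 ^ n) -> nat -> R with
  | 0%N => fun _ _ => 0
  | n'.+1 => fun b j => match j with
             | 0%N => if ((splitb b).1 : nat) == 0%N then 0 else pi / 2
             | j'.+1 => bas (splitb b).2 j'
             end
  end.

Lemma bas_range n (b : 'I_(2 ^ n)) j : (j < n)%N -> 0 <= bas b j < 2 * pi.
Proof.
elim: n b j => [//|n IH] b [|j] /=; last by rewrite ltnS; apply: IH.
move=> _; case: ifP => _.
  by rewrite lexx /= mulr_gt0 // pi_gt0.
have := @pi_gt0 R; move=> h; apply/andP; split; lra.
Qed.

Lemma prod_stateS n (th : nat -> R) : prod_state n.+1 th =
  castmx (esym (expnS 2 n), muln1 1) (qubit (th 0%N) *t prod_state n (fun j => th j.+1)).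
Proof. by []. Qed.

Definition ang (b1 : 'I_2) : R := if (b1 : nat) == 0%N then 0 else pi / 2.

Lemma bas_joinb0 n b1 (b2 : 'I_(2 ^ n)) : bas (joinb (b1, b2)) 0 = ang b1.
Proof.
have -> : bas (joinb (b1, b2)) 0 = (if ((splitb (joinb (b1, b2))).1 : nat) == 0%N then 0 else pi / 2) by [].
by rewrite joinbK.
Qed.

Lemma bas_joinbS n b1 (b2 : 'I_(2 ^ n)) : (fun j => bas (joinb (b1, b2)) j.+1) = bas b2.
Proof.
have -> : (fun j => bas (joinb (b1, b2)) j.+1) = bas (splitb (joinb (b1, b2))).2 by [].
by rewrite joinbK.
Qed.

Lemma qubit_sum : \sum_(b1 < 2) qubit (ang b1) *m adjmx (qubit (ang b1)) = 1%:M.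
Proof.
rewrite !big_ord_recr big_ord0 /= add0r /ang /=.
apply/matrixP => i j; rewrite !mxE !big_ord1 !mxE.
case: i => [[|[|//]] ?]; case: j => [[|[|//]] ?]; rewrite /= ?cos0 ?sin0 ?cos_pihalf ?sin_pihalf.

all: by rewrite ?conjR ?rmorph0 ?rmorph1 ?mulr0 ?mul0r ?mulr1 ?addr0 ?add0r.
Qed.

Lemma bas_sum n : \sum_(b < 2 ^ n) prod_state n (bas b) *m adjmx (prod_state n (bas b)) = 1%:M.
Proof.
elim: n => [|n IH].
  rewrite big_ord1 /=; apply/matrixP => i j; rewrite !ord1 !mxE big_ord1 !mxE.
  by rewrite conjC1 mulr1.
rewrite sum_splitb.
under eq_bigr => b1 _ do under eq_bigr => b2 _ do
  rewrite prod_stateS cast_outer bas_joinb0 bas_joinbS.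
under eq_bigr => b1 _ do rewrite -castmx_sum -tensmx_sumr IH.
by rewrite -castmx_sum -tensmx_suml qubit_sum tensmx11 castmx1.
Qed.


Lemma qf_sum1 n I (r : seq I) (P : pred I) (F : I -> 'M[C]_n) x :
  qf (\sum_(i <- r | P i) F i) x = \sum_(i <- r | P i) qf (F i) x.
Proof.
rewrite /qf mulmx_sumr mulmx_suml summxE; apply: eq_bigr => i _ //.
Qed.

Lemma qf1_unitary' n (U : 'M[C]_n) x : U \is unitarymx -> qf 1%:M (U *m x) = qf 1%:M x.
Proof.
by move=> Uu; rewrite /qf !mulmx1 adjmx_mul -mulmxA [adjmx U *m _]mulmxA unitary_adj // mul1mx.
Qed.

Lemma qf_r1s_ge0 n I (r : seq I) (c : I -> C) (W : I -> 'cV[C]_n) y :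
  (forall l, 0 <= c l) -> 0 <= qf (\sum_(l <- r) c l *: (W l *m adjmx (W l))) y.
Proof.
move=> c0; rewrite qf_sum; apply: sumr_ge0 => l _.
by rewrite mulr_ge0 // qf_outer_ge0.
Qed.

Lemma qf_r1s_le n I (r : seq I) (c : I -> C) (W : I -> 'cV[C]_n) y lam :
  (forall l, c l <= lam) ->
  qf (\sum_(l <- r) c l *: (W l *m adjmx (W l))) y <=
  lam * qf (\sum_(l <- r) 1 *: (W l *m adjmx (W l))) y.
Proof.
move=> cl; rewrite !qf_sum mulr_sumr; apply: ler_sum => l _.
by rewrite mul1r; apply: ler_wpM2r; rewrite ?qf_outer_ge0.
Qed.

Lemma tr_outer_unit n (w : 'cV[C]_n) : adjmx w *m w = 1%:M -> \tr (w *m adjmx w) = 1.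
Proof. by move=> h; rewrite mxtrace_mulC h mxtrace1. Qed.

Lemma qf1_adj_unit n (w : 'cV[C]_n) : adjmx w *m w = 1%:M -> qf 1%:M w = 1.
Proof. by move=> h; rewrite /qf mulmx1 h mxE. Qed.

Lemma finite_argmax (I : finType) (i0 : I) (F : I -> R) : exists j, forall i, F i <= F j.
Proof.
case: (@Order.TotalTheory.arg_maxP _ _ I i0 xpredT F isT) => j _ H.
by exists j => i; apply: H.
Qed.

Lemma lower_bound n k N (p : 'I_N -> R) (U : 'I_N -> 'M[C]_(2 ^ (n + k)))
   (rho_a : 'M[C]_(2 ^ k)) (rho0 : 'M[C]_(2 ^ (n + k))) :
  randomization (@SB R n) p U rho_a rho0 -> forall i, p i <= ((2 ^ n)%:R)^-1.
Proof.
move=> [hp [hsum [hU [[rah [rapsd ratr]] [_ hS]]]]] i.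
have [d [v [d0 raE one orth]]] := psd_decomp rah rapsd.
have e0 : (0 < 2 ^ k)%N by rewrite expn_gt0.
have [l0 dmax] := finite_argmax (Ordinal e0) d.
have dsum : \sum_l d l = 1.
  apply: (@complexI R); rewrite rmorph_sum rmorph1 -ratr raE raddf_sum.
  by apply: eq_bigr => l _ /=; rewrite mxtraceZ tr_outer_unit ?orth ?eqxx ?mulr1.
have lam_gt0 : 0 < d l0.
  have : 1 <= \sum_(l < 2 ^ k) d l0 by rewrite -dsum; apply: ler_sum => l _.
  rewrite sumr_const card_ord lt_neqAle d0 andbT => h; apply/eqP => h0.
  by move: h; rewrite -h0 mul0rn ler10.
have en : (0 < 2 ^ n)%N by rewrite expn_gt0.
pose b0 : 'I_(2 ^ n) := Ordinal en.
have hSb (b : 'I_(2 ^ n)) : rho0 = \sum_j (p j)%:C *: (U j *m qtens (prod_state n (bas b) *m adjmx (prod_state n (bas b))) rho_a *m adjmx (U j)).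
  by symmetry; apply: hS; exists (bas b); split => // j hj; apply: bas_range.
pose phi := prod_state n (bas b0).
pose w := v l0.
pose x := U i *m castc (phi *t w).
have Qpsd (u : 'cV[C]_(2 ^ n)) j : 0 <= qf (U j *m qtens (u *m adjmx u) rho_a *m adjmx (U j)) x.
  by rewrite qf_conj raE qtens_rank1 qf_r1s_ge0 // => l; rewrite ler0c.
have lower : (p i)%:C * (d l0)%:C <= qf rho0 x.
  rewrite (hSb b0) qf_sum (bigD1 i) //= -[X in X <= _]addr0 lerD //; last first.
    by apply: sumr_ge0 => j _; rewrite mulr_ge0 ?ler0c ?Qpsd.
  apply: ler_wpM2l; first by rewrite ler0c.
  rewrite qf_conj /x mulmxA unitary_adj // mul1mx /castc qf_tens_pure.
  have phin : (adjmx phi *m phi) 0 0 = 1.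
    by have := prod_state_norm n (bas b0); rewrite /qf mulmx1.
  rewrite qf_outer phin conjC1 mul1r.
  rewrite raE qf_sum (bigD1 l0) //= qf_outer orth eqxx mxE eqxx mulr1n conjC1 mulr1.
  rewrite big1 ?addr0 ?mul1r ?mulr1 //.
  by move=> l /negbTE nl; rewrite qf_outer orth nl !mxE /= !mulr0n conjC0 !mulr0.
have upper : qf rho0 x *+ 2 ^ n <= (d l0)%:C.
  have -> : qf rho0 x *+ 2 ^ n = \sum_(b < 2 ^ n) qf rho0 x by rewrite sumr_const card_ord.
  under eq_bigr => b _ do rewrite {1}(hSb b) qf_sum.
  rewrite exchange_big /=.
  have -> : (d l0)%:C = \sum_j (p j)%:C * (d l0)%:C.
    by rewrite -mulr_suml -rmorph_sum hsum rmorph1 mul1r.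
  apply: ler_sum => j _; rewrite -mulr_sumr; apply: ler_wpM2l; first by rewrite ler0c.
  under eq_bigr => b _ do rewrite qf_conj. rewrite raE. under eq_bigr => b _ do rewrite qtens_rank1. 
  apply: (@le_trans _ _ (\sum_b (d l0)%:C * qf (\sum_l 1 *: (castc (prod_state n (bas b) *t v l) *m
       adjmx (castc (prod_state n (bas b) *t v l)))) (adjmx (U j) *m x))).
    by apply: ler_sum => b _; apply: qf_r1s_le => l; rewrite lecR.
  rewrite -mulr_sumr -{2}[(d l0)%:C]mulr1; apply: ler_wpM2l; first by rewrite ler0c ltW.
  under eq_bigr => b _ do rewrite -qtens_rank1.
  rewrite -qf_sum1 -qtens_suml bas_sum.
  have -> : \sum_l 1 *: (v l *m adjmx (v l)) = 1%:M by rewrite -one; apply: eq_bigr => l _; rewrite scale1r.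
  rewrite qtens11 qf1_unitary // qf1_unitary' // /castc qf1_cast_tens prod_state_norm.
  by rewrite qf1_adj_unit ?orth ?eqxx // mulr1.
have : ((p i * d l0) *+ 2 ^ n)%:C <= (d l0)%:C.
  by apply: le_trans upper; rewrite rmorphMn rmorphM lerMn2r lower orbT.
rewrite lecR -mulrnAl -[X in _ <= X]mul1r ler_pM2r // => h.
rewrite -(@ler_pM2r _ ((2 ^ n)%:R)) ?ltr0n // mulVf ?pnatr_eq0 -?lt0n //.
by rewrite mulr_natr.
Qed.


Lemma entropy_ge n N (p : 'I_N -> R) :
  (forall i, 0 <= p i <= ((2 ^ n)%:R)^-1) -> \sum_i p i = 1 -> n%:R <= entropy p.
Proof.
move=> hp hs.
have ln2 : 0 < ln (2:R) by apply: ln_gt0; rewrite ltr1n.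
have -> : n%:R = \sum_i p i * n%:R by rewrite -mulr_suml hs mul1r.
rewrite /entropy -sumrN; apply: ler_sum => i _.
case: eqP => [->|pi0]; first by rewrite mul0r oppr0.
have /andP[p0 p1] := hp i.
have ppos : 0 < p i by rewrite lt_neqAle eq_sym p0 andbT; apply/eqP.
rewrite -mulrN; apply: ler_wpM2l => //.
have h : ln (p i) <= ln (((2 ^ n)%:R)^-1).
  by rewrite ler_ln // posrE // invr_gt0 ltr0n expn_gt0.
rewrite lnV ?posrE ?ltr0n ?expn_gt0 // natrX lnXn // in h.
rewrite -mulNr ler_pdivlMr //.
rewrite -(mulr_natl (ln 2) n) in h.
by rewrite lerNr.
Qed.


Definition Rot : 'M[C]_2 := \matrix_(i < 2, j < 2)
  (if ((i : nat) == 0%N) && ((j : nat) == 1%N) then -1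
   else if ((i : nat) == 1%N) && ((j : nat) == 0%N) then 1 else 0).

Definition Gm (b1 : 'I_2) : 'M[C]_2 := if (b1 : nat) == 0%N then 1%:M else Rot.

Fixpoint Ufam n : 'I_(2 ^ n) -> 'M[C]_(2 ^ n) :=
  match n return 'I_(2 ^ n) -> 'M[C]_(2 ^ n) with
  | 0%N => fun _ => 1%:M
  | n'.+1 => fun b => castmx (esym (expnS 2 n'), esym (expnS 2 n'))
                        (Gm (splitb b).1 *t Ufam (splitb b).2)
  end.

Lemma Ufam_joinb n b1 (b2 : 'I_(2 ^ n)) :
  Ufam (joinb (b1, b2)) = castmx (esym (expnS 2 n), esym (expnS 2 n)) (Gm b1 *t Ufam b2).
Proof.
have -> : Ufam (joinb (b1, b2)) = castmx (esym (expnS 2 n), esym (expnS 2 n))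
   (Gm (splitb (joinb (b1, b2))).1 *t Ufam (splitb (joinb (b1, b2))).2) by [].
by rewrite joinbK.
Qed.

Lemma Gm_unitary b1 : Gm b1 *m adjmx (Gm b1) = 1%:M.
Proof.
rewrite /Gm; case: ifP => _; first by rewrite adjmx1 mulmx1.
apply/matrixP => i j; rewrite !mxE !big_ord_recr big_ord0 /= !mxE.
case: i => [[|[|//]] ?]; case: j => [[|[|//]] ?]; rewrite /=;
  by rewrite ?rmorphN ?rmorph0 ?rmorph1 ?conjC0 ?conjC1 ?mulr0 ?mul0r ?mulr1 ?addr0 ?add0r ?mulN1r ?opprK.
Qed.

Lemma Ufam_unitary n (b : 'I_(2 ^ n)) : Ufam b *m adjmx (Ufam b) = 1%:M.
Proof.
elim: n b => [|n IH] b; first by rewrite /= adjmx1 mulmx1.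
rewrite -(splitbK b); case: (splitb b) => b1 b2.
by rewrite Ufam_joinb adjmx_cast castmx_mulmx adjmx_tens tensmx_mul IH Gm_unitary tensmx11 castmx1.
Qed.

Lemma outerE n (u : 'cV[C]_n) i j : (u *m adjmx u) i j = u i 0 * Num.conj (u j 0).
Proof. by rewrite mxE big_ord1 !mxE. Qed.

Lemma twirl2 t : \sum_(b1 < 2) Gm b1 *m (qubit t *m adjmx (qubit t)) *m adjmx (Gm b1) = 1%:M.
Proof.
have cs : cos t ^+ 2 + sin t ^+ 2 = 1 := cos2Dsin2 t.
pose r : 'cV[C]_2 := \col_(i < 2) (if (i : nat) == 0%N then - (sin t)%:C else (cos t)%:C).
have Rq : Rot *m qubit t = r.
  apply/matrixP => i j; rewrite !mxE !big_ord_recr big_ord0 /= !mxE /= add0r.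
  by case: i => [[|[|//]] ?]; rewrite /= ?mulN1r ?mul1r ?mul0r ?addr0 ?add0r.
rewrite !big_ord_recr big_ord0 /= add0r /Gm /= adjmx1 mul1mx mulmx1.
rewrite mulmxA -mulmxA -adjmx_mul Rq.
apply/matrixP => i j; rewrite mxE !outerE !mxE.
case: i => [[|[|//]] ?]; case: j => [[|[|//]] ?]; rewrite /= -?rmorphN ?conjR -!rmorphM -!rmorphD.
- by rewrite mulrNN -!expr2 cs rmorph1.
- by rewrite mulNr [cos t * _]mulrC subrr rmorph0.
- by rewrite mulrN [cos t * _]mulrC subrr rmorph0.
- by rewrite -!expr2 addrC cs rmorph1.
Qed.

Lemma twirl n (th : nat -> R) :
  \sum_(b < 2 ^ n) Ufam b *m (prod_state n th *m adjmx (prod_state n th)) *m adjmx (Ufam b) = 1%:M.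
Proof.
elim: n th => [|n IH] th.
  rewrite big_ord1 /= adjmx1 mul1mx mulmx1; apply/matrixP => i j.
  by rewrite !ord1 !mxE big_ord1 !mxE conjC1 mulr1.
rewrite sum_splitb.
under eq_bigr => b1 _ do under eq_bigr => b2 _ do
  rewrite prod_stateS cast_outer Ufam_joinb adjmx_cast !castmx_mulmx adjmx_tens !tensmx_mul.
under eq_bigr => b1 _ do rewrite -castmx_sum -tensmx_sumr IH.
by rewrite -castmx_sum -tensmx_suml twirl2 tensmx11 castmx1.
Qed.


Lemma tstarE m n (X : 'M[C]_(m, n)) : map_mx Num.conj (X^T) = adjmx X.
Proof. by rewrite /adjmx map_trmx. Qed.

Lemma qf1_ge0 m (x : 'cV[C]_m) : 0 <= (adjmx x *m 1%:M *m x) 0 0.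
Proof.
rewrite mulmx1 mxE; apply: sumr_ge0 => l _.
by rewrite !mxE mulrC mul_conjC_ge0.
Qed.

Lemma construction n : exists (k N : nat) (p : 'I_N -> R) (U : 'I_N -> 'M[C]_(2 ^ (n + k)))
   (rho_a : 'M[C]_(2 ^ k)) (rho0 : 'M[C]_(2 ^ (n + k))),
   randomization (@SB R n) p U rho_a rho0 /\ entropy p = n%:R.
Proof.
pose E1 : (2 ^ n = 2 ^ (n + 0))%N := congr1 (expn 2) (esym (addn0 n)).
pose c : R := ((2 ^ n)%:R)^-1.
have en : (0 < 2 ^ n)%N by rewrite expn_gt0.
have c0 : 0 < c by rewrite /c invr_gt0 ltr0n.
have ck : c *+ 2 ^ n = 1.
  by rewrite /c -(mulr_natr ((2 ^ n)%:R^-1) (2 ^ n)) mulVf // pnatr_eq0 -lt0n.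
exists 0%N, (2 ^ n)%N, (fun _ => c), (fun i => castmx (E1, E1) (Ufam i)), 1%:M, (c%:C *: 1%:M).
split; last first.
  have ln2 : 0 < ln (2:R) by apply: ln_gt0; rewrite ltr1n.
  have lnc : ln c / ln 2 = - n%:R.
    rewrite /c lnV ?posrE ?ltr0n // natrX lnXn ?ltr0n //.
    by rewrite -(mulr_natl (ln 2) n) mulNr mulfK // gt_eqF.
  rewrite /entropy (gt_eqF c0) sumr_const card_ord lnc -mulrnAl ck.
  by rewrite mul1r opprK.
split; first by move=> _; apply: ltW.
split; first by rewrite sumr_const card_ord.
split.
  move=> i; apply/unitarymxP.
  by rewrite tstarE adjmx_cast castmx_mulmx Ufam_unitary castmx1.
split.
  split; first exact: adjmx1.
  split; first exact: qf1_ge0.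
  by rewrite mxtrace1 expn0.
split.
  split; first by rewrite adjmxZ conjR adjmx1.
  split.
    move=> x; rewrite -scalemxAr -scalemxAl mxE mulr_ge0 ?ler0c ?(ltW c0) //.
    exact: qf1_ge0.
  rewrite mxtraceZ mxtrace1 addn0 -(rmorph_nat (real_complex R)) -rmorphM mulVf ?rmorph1 //.
  by rewrite pnatr_eq0 -lt0n.
move=> phi [th [_ ->]].
have Q : qtens (prod_state n th *m adjmx (prod_state n th)) (1%:M : 'M[C]_(2 ^ 0)) =
         castmx (E1, E1) (prod_state n th *m adjmx (prod_state n th)).
  rewrite /qtens tens_mx_scalar scale1r castmx_comp.
  by congr castmx; congr pair; apply: eq_irrelevance.
rewrite Q.
under eq_bigr => i _ do rewrite adjmx_cast !castmx_mulmx -castmxZ.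
by rewrite -castmx_sum -scaler_sumr twirl castmxZ castmx1.
Qed.

End Aux.

Unset Implicit Arguments.
Set Strict Implicit.

Theorem corollary11 (R : realType) (n : nat) (hn : (1 <= n)%N) :
  (exists (k N : nat) (p : 'I_N -> R) (U : 'I_N -> 'M[R[i]]_(2 ^ (n + k)))
          (rho_a : 'M[R[i]]_(2 ^ k)) (rho0 : 'M[R[i]]_(2 ^ (n + k))),
      randomization (@SB R n) p U rho_a rho0 /\ entropy p = n%:R)
  /\
  (forall (k N : nat) (p : 'I_N -> R) (U : 'I_N -> 'M[R[i]]_(2 ^ (n + k)))
          (rho_a : 'M[R[i]]_(2 ^ k)) (rho0 : 'M[R[i]]_(2 ^ (n + k))),
      randomization (@SB R n) p U rho_a rho0 -> n%:R <= entropy p).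
Proof.
split; first exact: construction.
move=> k N p U rho_a rho0 hr.
apply: entropy_ge; last by case: hr => _ [].
move=> i; rewrite (lower_bound hr) andbT.
by case: hr => hp _; apply: hp.
Qed.
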